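(* Let $H$ be a graded, connected, free and cofree Hopf algebra over $K$, with $\mathfrak g=\mathrm{Prim}(H)$. Then for all $n\ge1$, $\dim(\mathfrak g_n)=\dim\big(\big(\frac{H^+}{H^{+2}}\big)_n\big)$.
   Context: $K$ is a commutative field of characteristic $\neq2$. A graded connected Hopf algebra is a Hopf algebra $H=\bigoplus_{n\ge0}H_n$ over $K$ with homogeneous structure maps, $H_0=K$ and every $H_n$ finite-dimensional. $H^+=\bigoplus_{n\ge1}H_n$, $H^{+2}$ is the span of products of two elements of $H^+$, $\mathfrak g_n=\mathfrak g\cap H_n$. $H$ is free if there is a graded subspace $V$ with $T(V)\to H$ an algebra isomorphism; cofree if it is isomorphic as a graded coalgebra to $coT(W)$ ($T(W)$ with deconcatenation coproduct) for some graded $W$ with $W_0=0$. *)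

(* Defs.v *)
(* Graded connected Hopf algebras over a field K, described
   in coordinates: H_n = K^(d n) with basis indexed by 'I_(d n); the basis of
   H = (+)_n H_n is indexed by  bidx d = {n : nat & 'I_(d n)}  (tag = degree).
   An element of (the completion of) H is a function  bidx d -> K ; H itself is
   the subset of finitely supported such functions.  Tensors H (x) H are
   functions  bidx d -> bidx d -> K, triple tensors take three arguments. *)
From HB Require Import structures.
From mathcomp Require Import all_boot all_order all_algebra.
Set Implicit Arguments. Unset Strict Implicit. Unset Printing Implicit Defensive.
Import Order.TTheory GRing.Theory Num.Theory.
Local Open Scope ring_scope.

Definition bidx (d : nat -> nat) := {n : nat & 'I_(d n)}.
Definition bdeg (d : nat -> nat) (b : bidx d) : nat := tag b.

Definition sumle (K : fieldType) (d : nat -> nat) (n : nat) (F : bidx d -> K) : K :=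
  \sum_(p < n.+1) \sum_(i < d p) F (existT (fun k => 'I_(d k)) (nat_of_ord p) i).

Record hopf_data (K : fieldType) := HopfData {
  hdim : nat -> nat;
  hmul : bidx hdim -> bidx hdim -> bidx hdim -> K;     (* coeff of c in a*b *)
  hunit : bidx hdim -> K;
  hcomul : bidx hdim -> bidx hdim -> bidx hdim -> K;   (* coeff of a(x)b in Delta c *)
  hcounit : bidx hdim -> K
}.
Arguments hdim {K} h _.
Arguments hmul {K} h _ _ _.
Arguments hunit {K} h _.
Arguments hcomul {K} h _ _ _.
Arguments hcounit {K} h _.

Section Ops.
Variables (K : fieldType) (H : hopf_data K).
Local Notation d := (hdim H).
Local Notation B := (bidx d).
Definition elt := B -> K.
Definition tens2 := B -> B -> K.
Definition tens3 := B -> B -> B -> K.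

Definition finsupp (x : elt) : Prop := exists N : nat, forall b : B, (N < bdeg b)%N -> x b = 0.
Definition homog (n : nat) (x : elt) : Prop := forall b : B, bdeg b != n -> x b = 0.

Definition mulH (x y : elt) : elt := fun c =>
  sumle (bdeg c) (fun a => sumle (bdeg c) (fun b => x a * y b * hmul H a b c)).
Definition oneH : elt := hunit H.
Definition comulH (x : elt) : tens2 := fun a b =>
  sumle (bdeg a + bdeg b) (fun c => x c * hcomul H c a b).
Definition counitH (x : elt) : K := sumle 0 (fun u => x u * hcounit H u).
Definition tens (x y : elt) : tens2 := fun a b => x a * y b.
Definition addH (x y : elt) : elt := fun b => x b + y b.

Definition comul_l (T : tens2) : tens3 := fun a b c =>
  sumle (bdeg a + bdeg b) (fun f => T f c * hcomul H f a b).
Definition comul_r (T : tens2) : tens3 := fun a b c =>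
  sumle (bdeg b + bdeg c) (fun f => T a f * hcomul H f b c).
Definition counit_l (T : tens2) : elt := fun b => sumle 0 (fun u => hcounit H u * T u b).
Definition counit_r (T : tens2) : elt := fun a => sumle 0 (fun u => T a u * hcounit H u).
Definition mulT (T U : tens2) : tens2 := fun a b =>
  sumle (bdeg a) (fun a1 => sumle (bdeg a) (fun b1 =>
  sumle (bdeg b) (fun a2 => sumle (bdeg b) (fun b2 =>
    T a1 a2 * U b1 b2 * hmul H a1 b1 a * hmul H a2 b2 b)))).

(* linear endomorphism S of H given by coefficients S a b (coeff of b in S a) *)
Definition applyS (S : B -> B -> K) (x : elt) : elt := fun b =>
  sumle (bdeg b) (fun a => x a * S a b).
Definition conv_Sid (S : B -> B -> K) (x : elt) : elt := fun c =>
  sumle (bdeg c) (fun a => sumle (bdeg c) (fun b =>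
    (sumle (bdeg c) (fun a' => comulH x a' b * S a' a)) * hmul H a b c)).
Definition conv_idS (S : B -> B -> K) (x : elt) : elt := fun c =>
  sumle (bdeg c) (fun a => sumle (bdeg c) (fun b =>
    (sumle (bdeg c) (fun b' => comulH x a b' * S b' b)) * hmul H a b c)).

Definition is_graded_connected_hopf : Prop :=
  (forall a b c : B, hmul H a b c != 0 -> bdeg c = (bdeg a + bdeg b)%N) /\
  (forall a b c : B, hcomul H c a b != 0 -> bdeg c = (bdeg a + bdeg b)%N) /\
  (forall u : B, hunit H u != 0 -> bdeg u = 0%N) /\
  (forall u : B, hcounit H u != 0 -> bdeg u = 0%N) /\
  (d 0 = 1%N) /\
  (forall x y z, finsupp x -> finsupp y -> finsupp z ->
     mulH (mulH x y) z = mulH x (mulH y z)) /\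
  (forall x, finsupp x -> mulH oneH x = x /\ mulH x oneH = x) /\
  (forall x, finsupp x -> comul_l (comulH x) = comul_r (comulH x)) /\
  (forall x, finsupp x -> counit_l (comulH x) = x /\ counit_r (comulH x) = x) /\
  (forall x y, finsupp x -> finsupp y ->
     comulH (mulH x y) = mulT (comulH x) (comulH y)) /\
  (forall x y, finsupp x -> finsupp y ->
     counitH (mulH x y) = counitH x * counitH y) /\
  (comulH oneH = tens oneH oneH) /\ (counitH oneH = 1) /\
  (exists S : B -> B -> K,
    (forall a b : B, S a b != 0 -> bdeg a = bdeg b) /\
    (forall x, finsupp x ->
       conv_Sid S x = (fun c => counitH x * oneH c) /\
       conv_idS S x = (fun c => counitH x * oneH c))).

Definition in_Hplus (x : elt) : Prop := finsupp x /\ forall b : B, bdeg b = 0%N -> x b = 0.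
Definition in_Hplus2 (z : elt) : Prop :=
  exists (k : nat) (x y : 'I_k -> elt),
    (forall i, in_Hplus (x i) /\ in_Hplus (y i)) /\
    z = (fun b => \sum_(i < k) mulH (x i) (y i) b).

Definition primitive (x : elt) : Prop :=
  finsupp x /\ comulH x = (fun a b => x a * oneH b + oneH a * x b).

Definition embed (n : nat) (v : 'rV[K]_(d n)) : elt := fun b =>
  if bdeg b == n then
    match (insub (nat_of_ord (tagged b)) : option 'I_(d n)) with
    | Some j => v ord0 j
    | None => 0
    end
  else 0.

Definition letter (e : nat -> nat) := {n : nat & 'I_(e n)}.
Definition wdeg (e : nat -> nat) (w : seq (letter e)) : nat := sumn [seq tag l | l <- w].

Definition words_basis (e : nat -> nat) (phi : seq (letter e) -> elt) : Prop :=
  (forall (ws : seq (seq (letter e))) (c : seq (letter e) -> K), uniq ws ->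
     (fun b => \sum_(w <- ws) c w * phi w b) = (fun _ => 0) ->
     forall w, w \in ws -> c w = 0) /\
  (forall x, finsupp x -> exists (ws : seq (seq (letter e))) (c : seq (letter e) -> K),
     x = (fun b => \sum_(w <- ws) c w * phi w b)).

(* free: H = T(V) for a graded subspace V (V_0 = 0 necessarily) with homogeneous
   basis gen; the algebra map T(V) -> H sends the word basis of T(V) to monomials *)
Definition monomial (e : nat -> nat) (gen : letter e -> elt) (w : seq (letter e)) : elt :=
  foldr (fun l acc => mulH (gen l) acc) oneH w.
Definition is_free : Prop :=
  exists (e : nat -> nat) (gen : letter e -> elt),
    e 0 = 0%N /\ (forall l, homog (tag l) (gen l)) /\ words_basis (monomial gen).

(* cofree: graded coalgebra isomorphism coT(W) -> H, W graded with W_0 = 0 and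
   homogeneous basis the letters; coT(W) has basis the words, with
   deconcatenation coproduct and counit eps(w) = [w == nil] *)
Definition is_cofree : Prop :=
  exists (e : nat -> nat) (phi : seq (letter e) -> elt),
    [/\ e 0 = 0%N,
        (forall w, homog (wdeg w) (phi w)),
        words_basis phi,
        (forall w, comulH (phi w) =
           (fun a b => \sum_(j < (size w).+1) phi (take j w) a * phi (drop j w) b)) &
        (forall w, counitH (phi w) = (w == [::])%:R)].

End Ops.

(* Main.v *)
Require Import Defs.
From HB Require Import structures.
From mathcomp Require Import all_boot all_order all_algebra.
From mathcomp Require Import zify ring.
From Stdlib Require Import FunctionalExtensionality.
Import GRing.Theory.
Local Open Scope ring_scope.

Section Words.
Variable e : nat -> nat.

Definition lrange (n : nat) : seq (letter e) :=
  [seq (existT (fun k => 'I_(e k)) k i : letter e) | k <- iota 1 n, i <- enum 'I_(e k)].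

Fixpoint wordsF (f n : nat) : seq (seq (letter e)) :=
  if n is 0 then [:: [::]] else
  if f is f'.+1 then [seq l :: w | l <- lrange n, w <- wordsF f' (n - tag l)]
  else [::].

Definition words n := wordsF n n.

Lemma mem_lrange n l : (l \in lrange n) = (0 < tag l <= n)%N.
Proof.
apply/allpairsPdep/idP.
  by move=> [k [i [+ _ ->]]]; rewrite mem_iota /= add1n ltnS.
case: l => k i /= Hk; exists k, i; split => //.
  by rewrite mem_iota add1n ltnS.
by rewrite mem_enum.
Qed.

Lemma uniq_lrange n : uniq (lrange n).
Proof.
apply: allpairs_uniq_dep; first exact: iota_uniq.
  by move=> k _; exact: enum_uniq.
by move=> [k i] [k' i'] _ _.
Qed.

Definition posw (w : seq (letter e)) := all (fun l : letter e => 0 < tag l)%N w.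

Lemma mem_wordsF f n w : (n <= f)%N ->
  (w \in wordsF f n) = (wdeg w == n) && posw w.
Proof.
elim: f n w => [|f IH] [|n] w //=.
- rewrite inE; case: w => //= l w; rewrite /wdeg /=.
  by case: (tag l) => //= k; rewrite andbF.
- rewrite inE; case: w => //= l w; rewrite /wdeg /=.
  by case: (tag l) => //= k; rewrite andbF.
move=> Hn; apply/allpairsPdep/idP.
  move=> [[k i] [w' [Hl Hw' ->]]]; move: Hl Hw'; rewrite mem_lrange /= => /andP [Hl1 Hl2] Hw'.
  rewrite IH in Hw'; last by lia.
  move: Hw' => /andP [/eqP Hd Hp]; rewrite /= Hl1 Hp andbT /wdeg /= -/(wdeg w') Hd.
  by rewrite subnKC ?eqxx.
case: w => [|[k i] w]; first by rewrite /wdeg.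
rewrite /wdeg /= -/(wdeg w) => /andP [/eqP Hd /andP [Hl Hp]].
exists (existT _ k i), w; split => //.
  by rewrite mem_lrange Hl -Hd leq_addr.
rewrite IH -Hd ?addKn ?eqxx //.
move: Hn Hl; rewrite -Hd /=; lia.
Qed.

Lemma uniq_wordsF f n : uniq (wordsF f n).
Proof.
elim: f n => [|f IH] [|n] //=.
apply: allpairs_uniq_dep; first exact: uniq_lrange.
  by move=> l _; exact: IH.
by move=> [l w] [l' w'] _ _ /= [-> ->].
Qed.

Lemma mem_words n w : (w \in words n) = (wdeg w == n) && posw w.
Proof. exact: mem_wordsF. Qed.

Lemma uniq_words n : uniq (words n).
Proof. exact: uniq_wordsF. Qed.

Lemma size_wordsF f n : (n <= f)%N -> size (wordsF f n) = size (words n).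
Proof.
move=> Hn; apply: perm_size; apply: uniq_perm; rewrite ?uniq_wordsF //.
by move=> w; rewrite mem_words mem_wordsF.
Qed.

Lemma size_words_rec n : (0 < n)%N ->
  size (words n) = (\sum_(k <- iota 1 n) e k * size (words (n - k)))%N.
Proof.
case: n => // n _; rewrite {1}/words [in LHS]/= size_allpairs_dep sumnE big_map /lrange big_allpairs_dep.
apply: eq_big_seq => k; rewrite mem_iota add1n ltnS => /andP [Hk1 Hk2].
rewrite /= size_wordsF; last by lia.
by rewrite big_const_seq /= count_predT size_enum_ord iter_addn_0 mulnC.
Qed.

End Words.

Lemma e_eq (e e' d : nat -> nat) : e 0 = 0%N -> e' 0 = 0%N -> d 0 = 1%N ->
  (forall m, size (words e m) = d m) -> (forall m, size (words e' m) = d m) ->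
  forall k, e k = e' k.
Proof.
move=> e0 e'0 d0 He He' k; elim/ltn_ind: k => -[|k] IH; first by rewrite e0 e'0.
have E1 : d k.+1 = (\sum_(j <- iota 1 k.+1) e j * d (k.+1 - j))%N.
  by rewrite -He size_words_rec //; apply: eq_bigr => j _; rewrite He.
have E2 : d k.+1 = (\sum_(j <- iota 1 k.+1) e' j * d (k.+1 - j))%N.
  by rewrite -He' size_words_rec //; apply: eq_bigr => j _; rewrite He'.
rewrite E1 in E2; move: E2.
have -> : iota 1 k.+1 = index_iota 1 k.+2 by rewrite /index_iota subSS subn0.
rewrite [in X in X = _]big_nat_recr // [in X in _ = X]big_nat_recr //= subnn d0 !muln1.
rewrite (@eq_big_nat _ _ _ 1 k.+1 _ (fun j => e' j * d (k.+1 - j))%N) => [/eqP|j /andP [_ Hj]].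
  by rewrite eqn_add2l => /eqP.
by rewrite IH.
Qed.

Set Implicit Arguments. Unset Strict Implicit. Unset Printing Implicit Defensive.

Section Proj.
Variables (K : fieldType) (H : hopf_data K).
Local Notation d := (hdim H).
Local Notation B := (bidx d).

Definition proj (n : nat) (x : elt H) : 'rV[K]_(d n) := \row_j x (existT _ n j).

Lemma embed_proj n x : homog n x -> embed (proj n x) = x.
Proof.
move=> Hx; apply: functional_extensionality => -[m i]; rewrite /embed /bdeg /=.
case: eqP => [Em|Nm]; last by rewrite Hx //; apply/eqP.
by subst m; rewrite valK mxE.
Qed.

Lemma proj_embed n (v : 'rV[K]_(d n)) : proj n (embed v) = v.
Proof.
apply/rowP => j; rewrite mxE /embed /bdeg /= eqxx.
by rewrite (_ : insub _ = Some j) ?valK // ; rewrite (ord1 ord0).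
Qed.

Lemma homog_embed n (v : 'rV[K]_(d n)) : homog n (embed v).
Proof. by move=> b Hb; rewrite /embed (negbTE Hb). Qed.

Lemma homog_finsupp n (x : elt H) : homog n x -> finsupp x.
Proof. by move=> Hx; exists n => b Hb; apply: Hx; rewrite neq_ltn Hb orbT. Qed.

Lemma embed0 n b : embed (0 : 'rV[K]_(d n)) b = 0.
Proof. by rewrite /embed; case: eqP => // _; case: insub => // j; rewrite mxE. Qed.

Lemma embedD n (u v : 'rV[K]_(d n)) b : embed (u + v) b = embed u b + embed v b.
Proof.
rewrite /embed; case: eqP => _; last by rewrite addr0.
by case: insub => [j|]; rewrite ?mxE ?addr0.
Qed.

Lemma embedZ n a (v : 'rV[K]_(d n)) b : embed (a *: v) b = a * embed v b.
Proof.
rewrite /embed; case: eqP => _; last by rewrite mulr0.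
by case: insub => [j|]; rewrite ?mxE ?mulr0.
Qed.

Lemma embed_sum n (I : Type) (r : seq I) (F : I -> 'rV[K]_(d n)) b :
  embed (\sum_(i <- r) F i) b = \sum_(i <- r) embed (F i) b.
Proof.
elim: r => [|i r IH]; first by rewrite !big_nil embed0.
by rewrite !big_cons embedD IH.
Qed.

Lemma proj_sum n (I : Type) (r : seq I) (a : I -> K) (y : I -> elt H) :
  proj n (fun b => \sum_(i <- r) a i * y i b) = \sum_(i <- r) a i *: proj n (y i).
Proof.
apply/rowP => j; rewrite mxE summxE; apply: eq_bigr => i _.
by rewrite !mxE.
Qed.

Lemma sum_if_eq (T : eqType) (r : seq T) (w : T) (F : K) : uniq r ->
  \sum_(u <- r) (if w == u then F else 0) = if w \in r then F else 0.
Proof.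
elim: r => [|u r IH]; first by rewrite big_nil.
rewrite big_cons inE /= => /andP [Hu Hr]; rewrite IH //.
case: (eqVneq w u) => [->|_] /=; last by rewrite add0r.
by rewrite (negbTE Hu) addr0.
Qed.

End Proj.

Section Basis.
Variables (K : fieldType) (H : hopf_data K) (e : nat -> nat)
  (phi : seq (letter e) -> elt H).
Hypothesis e0 : e 0 = 0%N.
Hypothesis phom : forall w, homog (wdeg w) (phi w).
Hypothesis pbasis : words_basis phi.

Lemma posw_all (w : seq (letter e)) : posw e w.
Proof.
elim: w => //= -[[|k] i] w -> //=.
by have := ltn_ord i; move: (nat_of_ord i) => m; rewrite e0.
Qed.

Lemma mem_wordsE n w : (w \in words e n) = (wdeg w == n).
Proof. by rewrite mem_words posw_all andbT. Qed.

Lemma phom' w m : wdeg w = m -> homog m (phi w).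
Proof. by move=> <-. Qed.

Lemma regroup (I : eqType) (s : seq I) (f : I -> seq (letter e)) (a : I -> K) :
  (forall b, \sum_(i <- s) a i * phi (f i) b = 0) ->
  forall u, \sum_(i <- s | f i == u) a i = 0.
Proof.
move=> H0 u; set U := undup (map f s).
case Hu: (u \in U); last first.
  rewrite big_seq_cond big1 // => i /andP [Hi /eqP Hfi].
  by move: Hu; rewrite mem_undup -Hfi map_f.
have key : forall b, \sum_(u' <- U) (\sum_(i <- s | f i == u') a i) * phi u' b = 0.
  move=> b; rewrite -[RHS](H0 b).
  transitivity (\sum_(u' <- U) \sum_(i <- s) (if f i == u' then a i * phi (f i) b else 0)).
    apply: eq_bigr => u' _; rewrite big_distrl /= big_mkcond; apply: eq_bigr => i _.
    by case: eqP => [->|].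
  rewrite exchange_big /=; apply: eq_big_seq => i Hi.
  by rewrite sum_if_eq ?undup_uniq // mem_undup map_f.
have := pbasis.1 U (fun u' => \sum_(i <- s | f i == u') a i) (undup_uniq _).
apply => //; exact: functional_extensionality key.
Qed.

Lemma normalize n x : homog n x ->
  exists c : seq (letter e) -> K, x = (fun b => \sum_(w <- words e n) c w * phi w b).
Proof.
move=> Hx; have [ws [c Hc]] := pbasis.2 x (homog_finsupp Hx).
exists (fun u => \sum_(w <- ws | w == u) c w).
apply: functional_extensionality => b.
case: (eqVneq (bdeg b) n) => Hb; last first.
  rewrite Hx // big_seq big1 // => u Hu; rewrite phom ?mulr0 //.
  by move: Hu; rewrite mem_wordsE => /eqP ->.
rewrite Hc; symmetry.
transitivity (\sum_(u <- words e n) \sum_(w <- ws) (if w == u then c w * phi w b else 0)).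
  apply: eq_bigr => u' _; rewrite big_distrl /= big_mkcond; apply: eq_bigr => i _.
  by case: eqP => [->|].
rewrite exchange_big /=; apply: eq_bigr => w _.
rewrite sum_if_eq ?uniq_words // mem_wordsE.
case: eqP => // Hw; rewrite phom ?mulr0 // Hb; by apply/eqP => /esym.
Qed.

Section Fixn.
Variable n : nat.
Variable P : pred (seq (letter e)).

Definition LP := [seq w <- words e n | P w].
Definition XP := [seq proj n (phi w) | w <- LP].

Lemma XP_free : free XP.
Proof.
apply/(@freeP _ _ _ (in_tuple XP)) => k Hk i.
have Hs : size XP = size LP by rewrite size_map.
have H0 : forall b, \sum_(j <- index_enum 'I_(size XP)) k j * phi (nth [::] LP j) b = 0.
  move=> b; have E := congr1 (fun v => embed v b) Hk.
  rewrite /= embed0 embed_sum in E; rewrite -[RHS]E; apply: eq_bigr => j _.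
  rewrite embedZ /= (nth_map [::]) -?Hs // embed_proj //.
  have Hj : (j < size LP)%N by rewrite -Hs.
  by apply: phom'; have := mem_nth [::] Hj; rewrite mem_filter mem_wordsE => /andP [_ /eqP].
have := regroup H0 (nth [::] LP i).
rewrite (eq_bigl (fun j => j == i)) ?big_pred1_eq // => j.
by rewrite nth_uniq -?Hs ?filter_uniq ?uniq_words.
Qed.

Lemma memX (I : eqType) (s : seq I) (a : I -> K) (f : I -> seq (letter e)) :
  (forall i, i \in s -> wdeg (f i) = n -> a i != 0 -> P (f i)) ->
  proj n (fun b => \sum_(i <- s) a i * phi (f i) b) \in <<XP>>%VS.
Proof.
move=> Hf; rewrite proj_sum big_seq; apply: memv_suml => i Hi.
case: (eqVneq (a i) 0) => Ha; first by rewrite Ha scale0r mem0v.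
apply: memvZ.
case: (eqVneq (wdeg (f i)) n) => Hw.
  apply: memv_span; apply: map_f; rewrite mem_filter mem_wordsE Hw eqxx andbT; exact: Hf Hi Hw Ha.
rewrite (_ : proj n _ = 0) ?mem0v //; apply/rowP => j; rewrite !mxE phom //.
by rewrite /bdeg /= eq_sym.
Qed.

Lemma nth_LP i : (i < size LP)%N -> P (nth [::] LP i) /\ wdeg (nth [::] LP i) = n.
Proof.
move=> Hi; have := mem_nth [::] Hi; rewrite mem_filter mem_wordsE => /andP [-> /eqP ->].
by [].
Qed.

Lemma embed_span (v : 'rV[K]_(hdim H n)) : v \in <<XP>>%VS ->
  embed v = (fun b => \sum_(i < size XP) coord (in_tuple XP) i v * phi (nth [::] LP i) b).
Proof.
move=> Hv; have Hs : size XP = size LP by rewrite size_map.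
have E := @coord_span _ _ _ (in_tuple XP) v Hv.
apply: functional_extensionality => b; rewrite {1}E embed_sum.
apply: eq_bigr => j _; rewrite embedZ /= (nth_map [::]) -?Hs // embed_proj //.
have Hj : (j < size LP)%N by rewrite -Hs.
by apply: phom'; have [_ ->] := nth_LP Hj.
Qed.

End Fixn.

Lemma dim_words n : hdim H n = size (words e n).
Proof.
have Hf := XP_free n predT.
have Hs : (fullv <= <<XP n predT>>)%VS.
  apply/subvP => v _; rewrite -(proj_embed v).
  have [c ->] := normalize (homog_embed v).
  exact: (@memX n predT _ _ _ id).
have : \dim (fullv : {vspace 'rV[K]_(hdim H n)}) = size (XP n predT).
  rewrite -(eqP Hf); apply/eqP; rewrite eqn_leq dimvS ?subvf //=.
  by apply: dimvS; apply: subvf.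
by rewrite dimvf /dim /= mul1n /XP size_map /LP filter_predT.
Qed.

End Basis.

Section Lin.
Variables (K : fieldType) (H : hopf_data K).
Local Notation d := (hdim H).
Local Notation B := (bidx d).

Lemma eq_sumle m (F G : B -> K) : (forall b, F b = G b) -> sumle m F = sumle m G.
Proof. by move=> /functional_extensionality ->. Qed.

Lemma sumle_sum m (I : Type) (r : seq I) (F : I -> B -> K) :
  sumle m (fun b => \sum_(i <- r) F i b) = \sum_(i <- r) sumle m (F i).
Proof.
rewrite /sumle; under eq_bigr do rewrite exchange_big.
by rewrite exchange_big.
Qed.

Lemma sumle_scale m a (F : B -> K) : sumle m (fun b => a * F b) = a * sumle m F.
Proof.
rewrite /sumle mulr_sumr; apply: eq_bigr => p _; by rewrite mulr_sumr.
Qed.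

Lemma sumle_zero m (F : B -> K) : (forall b, F b = 0) -> sumle m F = 0.
Proof. by move=> HF; rewrite /sumle big1 // => p _; rewrite big1. Qed.

Lemma mulH_bilin (I J : Type) (r : seq I) (s : seq J) (a : I -> K) (a' : J -> K)
  (x : I -> elt H) (y : J -> elt H) c :
  mulH (fun b => \sum_(i <- r) a i * x i b) (fun b => \sum_(j <- s) a' j * y j b) c =
  \sum_(i <- r) \sum_(j <- s) a i * a' j * mulH (x i) (y j) c.
Proof.
rewrite /mulH.
transitivity (sumle (bdeg c) (fun a0 => \sum_(i <- r) \sum_(j <- s)
   (a i * a' j) * sumle (bdeg c) (fun b0 => x i a0 * y j b0 * hmul H a0 b0 c))).
  apply: eq_sumle => a0.
  transitivity (sumle (bdeg c) (fun b0 => \sum_(i <- r) \sum_(j <- s)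
     (a i * a' j) * (x i a0 * y j b0 * hmul H a0 b0 c))).
    apply: eq_sumle => b0; rewrite !big_distrl /=; apply: eq_bigr => i _.
    rewrite !big_distrr /= big_distrl /=; apply: eq_bigr => j _; ring.
  rewrite sumle_sum; apply: eq_bigr => i _.
  rewrite sumle_sum; apply: eq_bigr => j _; by rewrite sumle_scale.
rewrite sumle_sum; apply: eq_bigr => i _.
rewrite sumle_sum; apply: eq_bigr => j _; by rewrite sumle_scale.
Qed.

Lemma mulHZl a (x y : elt H) c : mulH (fun b => a * x b) y c = a * mulH x y c.
Proof.
have E1 : (fun b => a * x b) = (fun b => \sum_(i <- [:: tt]) (fun _ => a) i * (fun _ => x) i b).
  by apply: functional_extensionality => b; rewrite big_seq1.
have E2 : y = (fun b => \sum_(i <- [:: tt]) (fun _ => 1) i * (fun _ => y) i b).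
  by apply: functional_extensionality => b; rewrite big_seq1 mul1r.
by rewrite E1 {1}E2 mulH_bilin !big_seq1 mulr1.
Qed.

Lemma comulH_lin (I : Type) (r : seq I) (a : I -> K) (x : I -> elt H) a0 b0 :
  comulH (fun b => \sum_(i <- r) a i * x i b) a0 b0 = \sum_(i <- r) a i * comulH (x i) a0 b0.
Proof.
rewrite /comulH.
transitivity (sumle (bdeg a0 + bdeg b0) (fun c => \sum_(i <- r) a i * (x i c * hcomul H c a0 b0))).
  apply: eq_sumle => c; rewrite big_distrl; apply: eq_bigr => i _; by rewrite mulrA.
rewrite sumle_sum; apply: eq_bigr => i _; by rewrite sumle_scale.
Qed.

End Lin.

Section Graded.
Variables (K : fieldType) (H : hopf_data K).
Local Notation d := (hdim H).
Local Notation B := (bidx d).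
Hypothesis Hmg : forall a b c : B, hmul H a b c != 0 -> bdeg c = (bdeg a + bdeg b)%N.
Hypothesis Hug : forall u : B, hunit H u != 0 -> bdeg u = 0%N.
Hypothesis Hd0 : d 0 = 1%N.

Lemma ord_d0 (i j : 'I_(d 0)) : i = j.
Proof.
apply: ord_inj; have := ltn_ord i; have := ltn_ord j.
move: (nat_of_ord i) (nat_of_ord j); rewrite Hd0; lia.
Qed.

Lemma deg0_eq (b b' : B) : bdeg b = 0%N -> bdeg b' = 0%N -> b = b'.
Proof.
case: b => m i; case: b' => m' i' /= Hm Hm'; subst m m'.
by rewrite (ord_d0 i i').
Qed.

Lemma sumle0_at (F : B -> K) b0 : bdeg b0 = 0%N -> sumle 0 F = F b0.
Proof.
case: b0 => m i0 /= Hm; subst m.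
rewrite /sumle big_ord1 /= (bigD1 i0) //= big1 ?addr0 // => j Hj.
by move: Hj; rewrite (ord_d0 j i0) eqxx.
Qed.

Lemma mulH_homog p q (x y : elt H) : homog p x -> homog q y -> homog (p + q) (mulH x y).
Proof.
move=> Hx Hy c Hc; rewrite /mulH sumle_zero // => a; rewrite sumle_zero // => b.
case: (eqVneq (bdeg a) p) => Ha; last by rewrite Hx ?mul0r.
case: (eqVneq (bdeg b) q) => Hb; last by rewrite (Hy b) ?mulr0 ?mul0r.
case: (eqVneq (hmul H a b c) 0) => Hh; first by rewrite Hh mulr0.
by move: Hc; rewrite (Hmg Hh) Ha Hb eqxx.
Qed.

Lemma oneH_homog : homog 0 (@oneH K H).
Proof.
move=> b Hb; case: (eqVneq (hunit H b) 0) => // /Hug Hb'.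
by rewrite Hb' in Hb.
Qed.

Definition d0pos : (0 < d 0)%N := eq_ind_r (fun m => (0 < m)%N) (isT : (0 < 1)%N) Hd0.
Definition b0 : B := existT (fun k => 'I_(d k)) 0%N (Ordinal d0pos).
Lemma bdeg_b0 : bdeg b0 = 0%N. Proof. by []. Qed.

Hypothesis Hcu1 : counitH (@oneH K H) = 1.

Lemma hcounit_b0 : hcounit H b0 != 0.
Proof.
apply/eqP => E; move: Hcu1; rewrite /counitH (sumle0_at _ bdeg_b0) E mulr0 => /eqP.
by rewrite eq_sym oner_eq0.
Qed.

Lemma oneH_b0 : @oneH K H b0 != 0.
Proof.
apply/eqP => E; move: Hcu1; rewrite /counitH (sumle0_at _ bdeg_b0) E mul0r => /eqP.
by rewrite eq_sym oner_eq0.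
Qed.

Lemma eq_deg0 (x y : elt H) : homog 0 x -> homog 0 y -> counitH x = counitH y -> x = y.
Proof.
move=> Hx Hy; rewrite /counitH !(sumle0_at _ bdeg_b0) => /mulIf E.
apply: functional_extensionality => b; case: (eqVneq (bdeg b) 0%N) => Hb.
  by rewrite (deg0_eq Hb bdeg_b0) E // hcounit_b0.
by rewrite Hx ?Hy.
Qed.

Section Mono.
Variables (e : nat -> nat) (gen : letter e -> elt H).
Hypothesis e0 : e 0 = 0%N.
Hypothesis ghom : forall l, homog (tag l) (gen l).
Hypothesis Hassoc : forall x y z : elt H, finsupp x -> finsupp y -> finsupp z ->
     mulH (mulH x y) z = mulH x (mulH y z).
Hypothesis Hunit : forall x : elt H, finsupp x -> mulH (@oneH K H) x = x /\ mulH x (@oneH K H) = x.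

Lemma mono_homog w : homog (wdeg w) (monomial gen w).
Proof.
elim: w => [|l w IH] /=; first exact: oneH_homog.
exact: mulH_homog.
Qed.

Lemma mono_cat w w' : monomial gen (w ++ w') = mulH (monomial gen w) (monomial gen w').
Proof.
elim: w => [|l w IH] /=; first by rewrite (Hunit (homog_finsupp (mono_homog (w:=w')))).1.
rewrite IH Hassoc //; apply: homog_finsupp; [exact: ghom | exact: mono_homog | exact: mono_homog].
Qed.

End Mono.

End Graded.

Lemma sum_pred1 (K : fieldType) (T : eqType) (s : seq T) x (F : T -> K) :
  uniq s -> x \in s -> \sum_(p <- s | p == x) F p = F x.
Proof.
move=> Hu Hx; rewrite big_mkcond.
transitivity (\sum_(p <- s) if x == p then F x else 0).
  by apply: eq_bigr => p _; rewrite eq_sym; case: eqP => // ->.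
by rewrite sum_if_eq // Hx.
Qed.

Section Cofree.
Variables (K : fieldType) (H : hopf_data K).
Local Notation d := (hdim H).
Local Notation B := (bidx d).
Local Notation one := (@oneH K H).
Hypothesis Hug : forall u : B, hunit H u != 0 -> bdeg u = 0%N.
Hypothesis Hd0 : d 0 = 1%N.
Hypothesis Hcu1 : counitH (@oneH K H) = 1.
Variables (e : nat -> nat) (phi : seq (letter e) -> elt H).
Hypothesis e0 : e 0 = 0%N.
Hypothesis phom : forall w, homog (wdeg w) (phi w).
Hypothesis pbasis : words_basis phi.
Hypothesis pcomul : forall w, comulH (phi w) =
           (fun a b => \sum_(j < (size w).+1) phi (take j w) a * phi (drop j w) b).
Hypothesis pcounit : forall w, counitH (phi w) = (w == [::])%:R.

Lemma phi_nil : phi [::] = one.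
Proof.
apply: (eq_deg0 Hd0 Hcu1); [exact: (phom (w:=[::])) | exact: oneH_homog | by rewrite pcounit Hcu1].
Qed.

Lemma prim1 w : size w = 1%N ->
  comulH (phi w) = (fun a b => phi w a * one b + one a * phi w b).
Proof.
case: w => [|l [|]] //= _; rewrite pcomul; apply: functional_extensionality => a.
apply: functional_extensionality => b.
rewrite big_ord_recr big_ord_recr big_ord0 /= add0r phi_nil.
by rewrite addrC.
Qed.

Lemma prim_lin (I : Type) (r : seq I) (a : I -> K) (y : I -> elt H) :
  (forall i, comulH (y i) = (fun a0 b0 => y i a0 * one b0 + one a0 * y i b0)) ->
  comulH (fun b => \sum_(i <- r) a i * y i b) =
  (fun a0 b0 => (\sum_(i <- r) a i * y i a0) * one b0 + one a0 * (\sum_(i <- r) a i * y i b0)).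
Proof.
move=> Hy; apply: functional_extensionality => a0; apply: functional_extensionality => b0.
rewrite comulH_lin big_distrl big_distrr -big_split /=; apply: eq_bigr => i _.
rewrite Hy; ring.
Qed.

Definition P1 := fun w : seq (letter e) => size w == 1%N.
Definition Gsp n := <<XP phi n P1>>%VS.

Lemma addr_eq_self (x m : K) : x + m = x -> m = 0.
Proof. by move=> E; rewrite -(addKr x m) E addNr. Qed.

Lemma G_mem n (v : 'rV[K]_(d n)) : (0 < n)%N -> v \in Gsp n <-> primitive (embed v).
Proof.
move=> Hn; split.
  move=> Hv; split; first exact: homog_finsupp (homog_embed v).
  rewrite (embed_span e0 phom Hv).
  apply: prim_lin => i; apply: prim1.
  have Hs : size (XP phi n P1) = size (LP n P1) by rewrite size_map.
  have Hi : (i < size (LP n P1))%N by rewrite -Hs ltn_ord.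
  by have [/eqP] := nth_LP e0 Hi.
case=> _ Hp.
have [c Hc] := normalize e0 phom pbasis (homog_embed v).
set U := words e n.
have Hne : forall w, w \in U -> w != [::].
  move=> w; rewrite mem_wordsE //; case: w => [|//]; rewrite /wdeg /= => /eqP E.
  by rewrite -E in Hn.
have HM : forall a b, \sum_(w <- U) \sum_(j <- index_iota 1 (size w))
    c w * (phi (take j w) a * phi (drop j w) b) = 0.
  move=> a b; have := congr1 (fun T => T a b) Hp; rewrite /= Hc comulH_lin.
  have Esplit : forall w, w \in U -> c w * comulH (phi w) a b =
     c w * (phi w a * one b + one a * phi w b) +
     \sum_(j <- index_iota 1 (size w)) c w * (phi (take j w) a * phi (drop j w) b).
    move=> w Hw; rewrite pcomul -big_distrr -mulrDr; congr (_ * _).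
    rewrite -(big_mkord xpredT (fun j => phi (take j w) a * phi (drop j w) b)).
    have Hsz : (0 < size w)%N by move: (Hne w Hw); case: w {Hw}.
    rewrite big_ltn // big_nat_recr //= take0 drop0 take_size drop_size phi_nil.
    ring.
  rewrite (eq_big_seq _ Esplit) big_split /= => E.
  have E2 : \sum_(w <- U) c w * (phi w a * one b + one a * phi w b) =
     (\sum_(w <- U) c w * phi w a) * one b + one a * \sum_(w <- U) c w * phi w b.
    by rewrite big_distrl big_distrr -big_split; apply: eq_bigr => w _ /=; ring.
  by apply: addr_eq_self; rewrite E2 in E; exact: E.
set S := [seq (w, j) | w <- U, j <- index_iota 1 (size w)].
have HS : forall a b, \sum_(p <- S) c p.1 * (phi (take p.2 p.1) a * phi (drop p.2 p.1) b) = 0.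
  by move=> a b; rewrite big_allpairs_dep; apply: HM.
have H1 : forall b u, \sum_(p <- S | take p.2 p.1 == u) c p.1 * phi (drop p.2 p.1) b = 0.
  move=> b; apply: (regroup pbasis (f := fun p => take p.2 p.1)
                     (a := fun p => c p.1 * phi (drop p.2 p.1) b)) => a.
  rewrite -[RHS](HS a b); apply: eq_bigr => p _; ring.
have H2 : forall u v0, \sum_(p <- S | (take p.2 p.1 == u) && (drop p.2 p.1 == v0)) c p.1 = 0.
  move=> u v0; rewrite -big_filter_cond.
  apply: (regroup pbasis (s := [seq p <- S | take p.2 p.1 == u]) (f := fun p => drop p.2 p.1)
           (a := fun p => c p.1)) => b.
  by rewrite big_filter; exact: H1.
have uniqS : uniq S.
  apply: allpairs_uniq_dep; first exact: uniq_words.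
    by move=> w _; exact: iota_uniq.
  by move=> [w j] [w' j'] _ _ /= [-> ->].
have Hkey : forall w, w \in U -> (1 < size w)%N -> c w = 0.
  move=> w Hw Hs; rewrite -(H2 (take 1 w) (drop 1 w)).
  have HwS : (w, 1%N) \in S.
    by apply/allpairsPdep; exists w, 1%N; split => //; rewrite mem_index_iota Hs.
  rewrite -[c w]/((fun p : seq (letter e) * nat => c p.1) (w, 1%N)).
  rewrite -(sum_pred1 _ uniqS HwS) big_seq_cond [RHS]big_seq_cond.
  apply: eq_bigl => p; case HpS: (p \in S) => //=.
  move: HpS => /allpairsPdep [w' [j [Hw' Hj ->]]] /=.
  move: Hj; rewrite mem_index_iota => /andP [Hj1 Hj2].
  apply/idP/idP; first by move=> /eqP [-> ->]; rewrite !eqxx.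
  move=> /andP [/eqP E1 /eqP E2].
  have Ej : j = 1%N.
    by rewrite -(@size_takel j _ w') ?(ltnW Hj2) // E1 size_takel // ltnW.
  subst j; by rewrite -(cat_take_drop 1 w') E1 E2 cat_take_drop.
rewrite -(proj_embed v) Hc.
apply: (memX e0 phom (f := fun w => w)) => w Hw _ Hc0; rewrite /P1.
case: (ltngtP (size w) 1) => // [Hlt|Hgt].
  by move: (Hne w Hw); case: w Hw Hlt {Hc0}.
by rewrite (Hkey w Hw Hgt) eqxx in Hc0.
Qed.

End Cofree.

Section Free.
Variables (K : fieldType) (H : hopf_data K).
Local Notation d := (hdim H).
Local Notation B := (bidx d).
Local Notation one := (@oneH K H).
Hypothesis Hmg : forall a b c : B, hmul H a b c != 0 -> bdeg c = (bdeg a + bdeg b)%N.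
Hypothesis Hug : forall u : B, hunit H u != 0 -> bdeg u = 0%N.
Hypothesis Hd0 : d 0 = 1%N.
Hypothesis Hcu1 : counitH one = 1.
Hypothesis Hassoc : forall x y z : elt H, finsupp x -> finsupp y -> finsupp z ->
     mulH (mulH x y) z = mulH x (mulH y z).
Hypothesis Hunit : forall x : elt H, finsupp x -> mulH one x = x /\ mulH x one = x.
Variables (e : nat -> nat) (gen : letter e -> elt H).
Hypothesis e0 : e 0 = 0%N.
Hypothesis ghom : forall l, homog (tag l) (gen l).
Hypothesis gbasis : words_basis (monomial gen).

Local Notation mono := (monomial gen).

Lemma mhom (w : seq (letter e)) : homog (wdeg w) (mono w).
Proof. exact: (mono_homog Hmg Hug ghom). Qed.

Definition P2 := fun w : seq (letter e) => size w != 1%N.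
Definition Dsp n := <<XP mono n P2>>%VS.

Lemma tag_pos (l : letter e) : (0 < tag l)%N.
Proof. by have := posw_all e0 [:: l]; rewrite /posw /= andbT. Qed.

Lemma wdeg_pos (w : seq (letter e)) : w != [::] -> (0 < wdeg w)%N.
Proof. by case: w => // l w _; rewrite /wdeg /= addn_gt0 tag_pos. Qed.

Lemma mono0 w b : w != [::] -> bdeg b = 0%N -> mono w b = 0.
Proof.
move=> Hw Hb; apply: mhom; rewrite Hb eq_sym -lt0n; exact: wdeg_pos.
Qed.

Lemma Hplus_norm (x : elt H) : in_Hplus x -> exists (ws : seq (seq (letter e))) (c : seq (letter e) -> K),
  (forall w, c w != 0 -> w != [::]) /\ x = (fun b => \sum_(w <- ws) c w * mono w b).
Proof.
case=> Hf Hx0; have [ws [c Hc]] := gbasis.2 x Hf.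
exists ws, (fun w => if w == [::] then 0 else c w); split.
  by move=> w; apply: contraNneq => ->; rewrite eqxx.
set Z := \sum_(w <- ws) (if w == [::] then c w else 0).
have Ex : forall b, x b = \sum_(w <- ws) (if w == [::] then 0 else c w) * mono w b + Z * mono [::] b.
  move=> b; rewrite Hc big_distrl -big_split /=; apply: eq_bigr => w _.
  by case: eqP => [->|_]; rewrite ?mul0r ?add0r ?addr0.
have HZ : Z = 0.
  have := Ex (b0 Hd0); rewrite Hx0 // big1 ?add0r.
    by move/esym/eqP; rewrite mulf_eq0 (negbTE (oneH_b0 Hd0 Hcu1)) orbF => /eqP.
  move=> w _; case: eqP => [_|/eqP Hw]; first by rewrite mul0r.
  by rewrite mono0 // mulr0.
by apply: functional_extensionality => b; rewrite Ex HZ mul0r addr0.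
Qed.

Lemma prod_mem n (x y : elt H) : in_Hplus x -> in_Hplus y -> proj n (mulH x y) \in Dsp n.
Proof.
move=> /Hplus_norm [ws1 [c1 [Hc1 ->]]] /Hplus_norm [ws2 [c2 [Hc2 ->]]].
set S := [seq (w, w') | w <- ws1, w' <- ws2].
have -> : mulH (fun b => \sum_(w <- ws1) c1 w * mono w b) (fun b => \sum_(w <- ws2) c2 w * mono w b)
  = (fun b => \sum_(p <- S) (c1 p.1 * c2 p.2) * mono (p.1 ++ p.2) b).
  apply: functional_extensionality => b; rewrite mulH_bilin big_allpairs_dep.
  apply: eq_bigr => w _; apply: eq_bigr => w' _ /=.
  by rewrite (mono_cat Hmg Hug ghom Hassoc Hunit).
apply: (memX e0 mhom (f := fun p => p.1 ++ p.2)) => p _ _.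
rewrite mulf_eq0 negb_or => /andP [/Hc1 H1 /Hc2 H2]; rewrite /P2 size_cat.
by case: p H1 H2 => [[|? ?] [|? ?]] //= _ _; rewrite addnS.
Qed.

Lemma D_mem n (v : 'rV[K]_(d n)) : (0 < n)%N -> v \in Dsp n <-> in_Hplus2 (embed v).
Proof.
move=> Hn; split.
  move=> Hv; have E := embed_span e0 mhom Hv.
  have Hs : size (XP mono n P2) = size (LP n P2) by rewrite size_map.
  pose co := fun i : 'I_(size (XP mono n P2)) => coord (in_tuple (XP mono n P2)) i v.
  have Hnth : forall i : 'I_(size (XP mono n P2)),
      exists l w', nth [::] (LP n P2) i = l :: w' /\ w' != [::].
    move=> i; have Hi : (i < size (LP n P2))%N by rewrite -Hs ltn_ord.
    have [HP Hw] := nth_LP e0 Hi.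
    move: HP Hw; rewrite /P2; case: (nth [::] (LP n P2) i) => [|l [|l' w']] //=.
      by move=> _ E0; rewrite -E0 /wdeg in Hn.
    by move=> _ _; exists l, (l' :: w').
  exists (size (XP mono n P2)).
  exists (fun i : 'I_(size (XP mono n P2)) => match nth [::] (LP n P2) i with
                   | l :: _ => (fun b => co i * gen l b) | [::] => (fun _ => 0) end).
  exists (fun i : 'I_(size (XP mono n P2)) => match nth [::] (LP n P2) i with
                   | _ :: w' => mono w' | [::] => (fun _ => 0) end).
  split.
    move=> i; have [l [w' [-> Hw']]] := Hnth i; split => /=.
      split; first by apply: (homog_finsupp (n:=tag l)) => b Hb; rewrite ghom ?mulr0.
      by move=> b Hb; rewrite ghom ?mulr0 // Hb eq_sym -lt0n tag_pos.
    split; first exact: homog_finsupp (mhom (w:=w')).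
    by move=> b Hb; rewrite mono0.
  rewrite E; apply: functional_extensionality => b; apply: eq_bigr => i _.
  by have [l [w' [-> _]]] := Hnth i; rewrite /= mulHZl.
case=> k [x [y [Hxy Hz]]].
rewrite -(proj_embed v) Hz.
have -> : proj n (fun b => \sum_(i < k) mulH (x i) (y i) b) = \sum_(i < k) proj n (mulH (x i) (y i)).
  by apply/rowP => j; rewrite mxE summxE; apply: eq_bigr => i _; rewrite mxE.
apply: memv_suml => i _; have [Hx Hy] := Hxy i; exact: prod_mem.
Qed.

End Free.

Lemma count_single (e : nat -> nat) n : e 0 = 0%N -> (0 < n)%N ->
  count (fun w : seq (letter e) => size w == 1%N) (words e n) = e n.
Proof.
move=> e0 Hn; rewrite -size_filter.
have -> : e n = size [seq [:: existT (fun k => 'I_(e k)) n i] | i <- enum 'I_(e n)].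
  by rewrite size_map size_enum_ord.
apply: perm_size; apply: uniq_perm.
- exact: filter_uniq (uniq_words _ _).
- rewrite map_inj_uniq ?enum_uniq // => i j [] E.
  have := congr1 (tagged_as (existT (fun k => 'I_(e k)) n i)) E.
  by rewrite !tagged_asE.
move=> w; rewrite mem_filter (mem_wordsE e0); apply/andP/mapP.
  case: w => [|[k i] [|l w]] [] //= _; rewrite /wdeg /= addn0 => /eqP Ek; subst k.
  by exists i; rewrite ?mem_enum.
by move=> [i _ ->]; rewrite /wdeg /= addn0.
Qed.


Unset Implicit Arguments. Set Strict Implicit.

Theorem lemma4 (K : fieldType) (char2 : (2%:R : K) != 0) (H : hopf_data K) :
  is_graded_connected_hopf H -> is_free H -> is_cofree H ->
  forall n : nat, (1 <= n)%N ->
    exists G D : {vspace 'rV[K]_(hdim H n)},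
      (forall v, v \in G <-> primitive (embed v)) /\
      (forall v, v \in D <-> in_Hplus2 (embed v)) /\
      \dim G = (\dim (fullv : {vspace 'rV[K]_(hdim H n)}) - \dim D)%N.
Proof.
move=> [Hmg [Hcg [Hug [Hcug [Hd0 [Hassoc [Hunit [Hcoass [Hcounit [Hbi [Hbic [Hc1 [Hcu1 HS]]]]]]]]]]]]].
move=> [e [gen [e0 [ghom gbasis]]]] [e' [phi [e'0 phom pbasis pcomul pcounit]]] n Hn.
exists (Gsp phi n), (Dsp gen n); split.
  by move=> v; apply: (G_mem Hug Hd0 Hcu1 e'0 phom pbasis pcomul pcounit).
split.
  by move=> v; apply: (D_mem Hmg Hug Hd0 Hcu1 Hassoc Hunit e0 ghom gbasis).
have mhom := mono_homog Hmg Hug ghom.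
rewrite (eqP (XP_free e'0 phom pbasis n _)) (eqP (XP_free e0 mhom gbasis n _)).
rewrite /XP !size_map /LP !size_filter dimvf /dim /= mul1n.
rewrite (dim_words e0 mhom gbasis n) -(count_predC (fun w => size w == 1%N)).
have -> : count (predC (fun w : seq (letter e) => size w == 1%N)) (words e n) = count (P2 (e:=e)) (words e n).
  by apply: eq_count.
rewrite addnK /P1 count_single // count_single //.
apply: (@e_eq e' e (hdim H) e'0 e0 Hd0) => m.
  by rewrite (dim_words e'0 phom pbasis m).
by rewrite (dim_words e0 mhom gbasis m).
Qed.
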